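(* Fix $\alpha \in (0,1/2)$, $m$, $n$. There is $T_0$ such that for all $T \ge T_0$ and every run of Algorithm 1 in which the small gradient assumption holds, for all $i \in [m]$ and $t \in [T]$: (1) $(w_i^t)^\alpha \ge 4\eta\gamma$ and $w_i^t \ge \frac{1}{10\sqrt{m}} T^{1/(2(\alpha-1))}$; (2) $-32 (w_i^t)^{1-\alpha}\eta\gamma \le w_i^t - w_i^{t+1} \le 2 (w_i^t)^{2-\alpha}(m+1)\eta\gamma$.
   Context: Setting. There are $m$ experts and $n$ outcomes; $\Delta^k$ is the probability simplex in $\mathbb{R}^k$. For reports $\mathbf{p}^1,\dots,\mathbf{p}^m\in\Delta^n$ and $\mathbf{w}\in\Delta^m$, the logarithmic pool is $p^*_j(\mathbf{w}) = \frac{\prod_k (p^k_j)^{w_k}}{\sum_{\ell}\prod_k (p^k_\ell)^{w_k}}$. At each time $t\in[T]$, reports $\mathbf{p}^{t,1},\dots,\mathbf{p}^{t,m}$ and an outcome $j_t$ are revealed, with loss $L^t(\mathbf{w}) := -\ln p^*_{j_t}(\mathbf{w})$ and, by convention, $\partial_i L^t(\mathbf{w}) := \sum_{\ell} p^*_\ell(\mathbf{w}) \ln p^{t,i}_\ell - \ln p^{t,i}_{j_t}$. Algorithm 1 (parameter $\alpha \in (0,1/2)$): $R(\mathbf{w}) = -\frac{1}{\alpha}\sum_i w_i^\alpha$, $\eta = \frac{1}{\sqrt{T}\ln T}\cdot\frac{1}{12 m^{(1+\alpha)/2} n}$, $\mathbf{w}^1 = (1/m,\dots,1/m)$, $\eta_0=+\infty$.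 For $t=1,\dots,T$: if $\eta \le \min_i (w_i^t)^\alpha$ set $\eta_t = \min(\eta_{t-1},\eta)$, else $\eta_t = \min(\eta_{t-1}, \min_i w_i^t)$; then $\mathbf{w}^{t+1}\in\Delta^m$ is defined by $-(w_i^{t+1})^{\alpha-1} = -(w_i^t)^{\alpha-1} - \eta_t\partial_i L^t(\mathbf{w}^t) + c$ for all $i$, with $c$ the unique constant making $\sum_i w_i^{t+1}=1$. Let $\gamma := 12 n \ln T$. The small gradient assumption holds for a run if for every $t\in[T]$ and $i\in[m]$: $-\frac{\gamma}{w_i^t} \le \partial_i L^t(\mathbf{w}^t) \le \gamma$. *)

(* Defs.v *)
From Stdlib Require Import Reals Lra Lia List.
Import ListNotations.
Open Scope R_scope.

Definition sumR (k : nat) (f : nat -> R) : R :=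
  fold_right Rplus 0 (map f (seq 0 k)).
Definition prodR (k : nat) (f : nat -> R) : R :=
  fold_right Rmult 1 (map f (seq 0 k)).
(* minimum of f 0, ..., f (k-1)  (meaningful for k >= 1) *)
Definition minR (k : nat) (f : nat -> R) : R :=
  fold_right Rmin (f 0%nat) (map f (seq 0 k)).

(* x^a for x >= 0, a > 0, with the convention 0^a = 0. *)
Definition pw (x a : R) : R := if Rle_dec x 0 then 0 else Rpower x a.

(* Reports: p t i l = p^{t,i}_l ; experts i < m, outcomes l < n.
   Logarithmic pool of the reports (p t) with weight vector w. *)
Definition pool (m n : nat) (pt : nat -> nat -> R) (w : nat -> R) (l : nat) : R :=
  prodR m (fun k => pw (pt k l) (w k)) /
  sumR n (fun l' => prodR m (fun k => pw (pt k l') (w k))).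

(* Convention for the partial derivative of the loss L^t at w. *)
Definition dL (m n : nat) (pt : nat -> nat -> R) (jt : nat) (w : nat -> R) (i : nat) : R :=
  sumR n (fun l => pool m n pt w l * ln (pt i l)) - ln (pt i jt).

Definition eta_par (alpha : R) (m n T : nat) : R :=
  (1 / (sqrt (INR T) * ln (INR T))) *
  (1 / (12 * Rpower (INR m) ((1 + alpha) / 2) * INR n)).

Definition gamma_par (n T : nat) : R := 12 * INR n * ln (INR T).

Definition eta_cand (alpha : R) (m n T : nat) (wt : nat -> R) : R :=
  if Rle_dec (eta_par alpha m n T) (minR m (fun i => Rpower (wt i) alpha))
  then eta_par alpha m n T else minR m wt.

(* A run of Algorithm 1 with horizon T: reports p, outcomes j, weights w
   (w t = w^t for t = 1..T+1), step sizes e (e t = eta_t for t = 1..T). *)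
Definition is_run (alpha : R) (m n T : nat)
  (p : nat -> nat -> nat -> R) (j : nat -> nat)
  (w : nat -> nat -> R) (e : nat -> R) : Prop :=
  (forall t, (1 <= t <= T)%nat ->
     (j t < n)%nat /\
     forall i, (i < m)%nat ->
       (forall l, (l < n)%nat -> 0 <= p t i l) /\ sumR n (fun l => p t i l) = 1) /\
  (forall i, (i < m)%nat -> w 1%nat i = 1 / INR m) /\
  (* step sizes, with eta_0 = +infinity *)
  (forall t, (1 <= t <= T)%nat ->
     e t = if Nat.eqb t 1 then eta_cand alpha m n T (w t)
           else Rmin (e (t - 1)%nat) (eta_cand alpha m n T (w t))) /\
  (* mirror-descent update; w^{t+1} in the simplex (positive, as required
     for (w_i^{t+1})^{alpha-1} to be defined) *)
  (forall t, (1 <= t <= T)%nat ->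
     (forall i, (i < m)%nat -> 0 < w (S t) i) /\
     sumR m (fun i => w (S t) i) = 1 /\
     exists c : R, forall i, (i < m)%nat ->
       - Rpower (w (S t) i) (alpha - 1) =
       - Rpower (w t i) (alpha - 1) - e t * dL m n (p t) (j t) (w t) i + c).

(* Small gradient assumption.  The condition 0 < p^{t,i}_{j_t} makes
   d_i L^t finite (it follows from the assumption read in extended reals). *)
Definition small_gradient (m n T : nat)
  (p : nat -> nat -> nat -> R) (j : nat -> nat) (w : nat -> nat -> R) : Prop :=
  forall t i, (1 <= t <= T)%nat -> (i < m)%nat ->
    0 < p t i (j t) /\
    - (gamma_par n T / w t i) <= dL m n (p t) (j t) (w t) i /\
    dL m n (p t) (j t) (w t) i <= gamma_par n T.

(* Main.v *)
Require Import Defs.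
From Stdlib Require Import Reals Lra Lia List ZArith.
Import ListNotations.
Open Scope R_scope.

Lemma fold_plus_shift (l : list R) (b : R) :
  fold_right Rplus b l = fold_right Rplus 0 l + b.
Proof. induction l as [|x l IH]; simpl; [lra|rewrite IH; lra]. Qed.

Lemma sumR_0 f : sumR 0 f = 0.
Proof. reflexivity. Qed.

Lemma sumR_S m f : sumR (S m) f = sumR m f + f m.
Proof.
  unfold sumR. rewrite seq_S, map_app, fold_right_app. simpl.
  rewrite fold_plus_shift. lra.
Qed.

Lemma sumR_ext m f g : (forall k, (k < m)%nat -> f k = g k) -> sumR m f = sumR m g.
Proof.
  induction m; intros H; [reflexivity|].
  rewrite !sumR_S, IHm by (intros; apply H; lia). rewrite (H m) by lia. reflexivity.
Qed.

Lemma sumR_le m f g : (forall k, (k < m)%nat -> f k <= g k) -> sumR m f <= sumR m g.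
Proof.
  induction m; intros H; [rewrite !sumR_0; lra|].
  rewrite !sumR_S. assert (f m <= g m) by (apply H; lia).
  assert (sumR m f <= sumR m g) by (apply IHm; intros; apply H; lia). lra.
Qed.

Lemma sumR_lt m f g : (1 <= m)%nat -> (forall k, (k < m)%nat -> f k < g k) -> sumR m f < sumR m g.
Proof.
  destruct m as [|m]; intros Hm H; [lia|].
  rewrite !sumR_S. assert (f m < g m) by (apply H; lia).
  assert (sumR m f <= sumR m g) by (apply sumR_le; intros; apply Rlt_le, H; lia). lra.
Qed.

Lemma sumR_lin m (a b : R) f g :
  sumR m (fun k => a * f k + b * g k) = a * sumR m f + b * sumR m g.
Proof. induction m; [rewrite !sumR_0; lra| rewrite !sumR_S, IHm; lra]. Qed.

Lemma sumR_const m (c : R) : sumR m (fun _ => c) = INR m * c.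
Proof. induction m; [rewrite sumR_0; simpl; lra| rewrite sumR_S, IHm, S_INR; lra]. Qed.

Lemma sumR_nonneg m f : (forall k, (k < m)%nat -> 0 <= f k) -> 0 <= sumR m f.
Proof.
  intros H. rewrite <- (Rmult_0_r (INR m)), <- sumR_const. apply sumR_le. auto.
Qed.

Lemma sumR_ge_term m f i : (forall k, (k < m)%nat -> 0 <= f k) -> (i < m)%nat -> f i <= sumR m f.
Proof.
  induction m; intros H Hi; [lia|].
  rewrite sumR_S. destruct (Nat.eq_dec i m) as [->|Hne].
  - assert (0 <= sumR m f) by (apply sumR_nonneg; intros; apply H; lia). lra.
  - assert (f i <= sumR m f) by (apply IHm; [intros; apply H; lia| lia]).
    assert (0 <= f m) by (apply H; lia). lra.
Qed.

Lemma minR_ge_gen (f : nat -> R) (x d : R) (l : list nat) :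
  (forall k, In k l -> x <= f k) -> x <= d -> x <= fold_right Rmin d (map f l).
Proof.
  induction l as [|k l IH]; intros H Hd; simpl; [auto|].
  apply Rmin_glb; [apply H; left; auto| apply IH; auto; intros; apply H; right; auto].
Qed.

Lemma minR_ge m f x : (1 <= m)%nat -> (forall k, (k < m)%nat -> x <= f k) -> x <= minR m f.
Proof.
  intros Hm H. unfold minR. apply minR_ge_gen.
  - intros k Hk. apply in_seq in Hk. apply H. lia.
  - apply H. lia.
Qed.

Lemma bern_neg_e q d : q <= 0 -> 1 + q * (exp d - 1) <= exp (q * d).
Proof.
  intros Hq. pose proof (exp_ineq1_le (q*d)). pose proof (exp_ineq1_le d).
  assert (q * (exp d - 1) <= q * d) by (apply Rmult_le_compat_neg_l; lra). lra.
Qed.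

Lemma bern_conc_e t d : 0 <= t <= 1 -> exp (t * d) <= 1 + t * (exp d - 1).
Proof.
  intros Ht. set (E := exp (t*d)).
  assert (E > 0) by apply exp_pos.
  assert (h1 : exp d = E * exp ((1-t)*d)) by (unfold E; rewrite <- exp_plus; f_equal; ring).
  assert (h2 : 1 = E * exp (-(t*d))) by (unfold E; rewrite <- exp_plus; rewrite <- exp_0; f_equal; ring).
  pose proof (exp_ineq1_le ((1-t)*d)). pose proof (exp_ineq1_le (-(t*d))).
  assert (exp d >= E * (1 + (1-t)*d)) by (rewrite h1; apply Rle_ge, Rmult_le_compat_l; lra).
  assert (1 >= E * (1 - t*d)) by (rewrite h2 at 1; apply Rle_ge, Rmult_le_compat_l; lra).
  assert (t * exp d >= t * (E * (1 + (1-t)*d))) by (apply Rle_ge, Rmult_le_compat_l; lra).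
  assert ((1-t) * 1 >= (1-t) * (E * (1 - t*d))) by (apply Rle_ge, Rmult_le_compat_l; lra).
  nra.
Qed.

Lemma bern_pos_e q d : 1 <= q -> 1 + q * (exp d - 1) <= exp (q * d).
Proof.
  intros Hq. pose proof (bern_conc_e (/q) (q*d)).
  assert (0 < /q <= 1). { split. apply Rinv_0_lt_compat; lra.
    rewrite <- Rinv_1. apply Rinv_le_contravar; lra. }
  replace (/q * (q*d)) with d in H by (field; lra).
  specialize (H ltac:(lra)).
  assert (q * exp d <= q * (1 + / q * (exp (q * d) - 1))) by (apply Rmult_le_compat_l; lra).
  replace (q * (1 + / q * (exp (q * d) - 1))) with (q + exp (q*d) - 1) in H1 by (field; lra).
  lra.
Qed.

Lemma bern_conc_R x q : 0 < x -> 0 <= q <= 1 -> Rpower x q <= 1 + q * (x - 1).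
Proof. intros Hx Hq. unfold Rpower. pose proof (bern_conc_e q (ln x) Hq). rewrite exp_ln in H; auto. Qed.
Lemma bern_pos_R x q : 0 < x -> 1 <= q -> 1 + q * (x - 1) <= Rpower x q.
Proof. intros Hx Hq. unfold Rpower. pose proof (bern_pos_e q (ln x) Hq). rewrite exp_ln in H; auto. Qed.

Lemma Rpower_pos x q : 0 < Rpower x q.
Proof. apply exp_pos. Qed.

Lemma Rpow_neg_lt x y q : q < 0 -> 0 < x -> x < y -> Rpower y q < Rpower x q.
Proof.
  intros Hq Hx Hxy. unfold Rpower. apply exp_increasing.
  assert (ln x < ln y) by (apply ln_increasing; lra). nra.
Qed.

Lemma Rpow_neg_le x y q : q < 0 -> 0 < x -> x <= y -> Rpower y q <= Rpower x q.
Proof.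
  intros Hq Hx Hxy. destruct (Req_dec x y) as [->|]; [lra|]. apply Rlt_le, Rpow_neg_lt; lra.
Qed.

Lemma Rpow_neg_lt_inv x y q : q < 0 -> 0 < x -> 0 < y -> Rpower y q < Rpower x q -> x < y.
Proof.
  intros Hq Hx Hy H. destruct (Rlt_or_le x y) as [|Hle]; auto.
  pose proof (Rpow_neg_le y x q Hq Hy Hle). lra.
Qed.

Lemma Rpow_neg_le_inv x y q : q < 0 -> 0 < x -> 0 < y -> Rpower y q <= Rpower x q -> x <= y.
Proof.
  intros Hq Hx Hy H. destruct (Rle_or_lt x y) as [|Hlt]; auto.
  pose proof (Rpow_neg_lt y x q Hq Hy Hlt). lra.
Qed.

Lemma Rpower_inv_base x y : 0 < x -> Rpower (/ x) y = Rpower x (- y).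
Proof. intros Hx. unfold Rpower. rewrite ln_Rinv by auto. f_equal; ring. Qed.

Lemma Rpower_neg1 x : 0 < x -> Rpower x (-1) = / x.
Proof. intros. replace (-1) with (-(1)) by ring. rewrite Rpower_Ropp, Rpower_1; auto. Qed.

Lemma pm_split (mr yk q : R) : 0 < mr -> 0 < yk ->
  Rpower yk q = Rpower mr (-q) * Rpower (mr * yk) q.
Proof.
  intros. rewrite <- Rpower_mult_distr by auto. rewrite <- Rmult_assoc, <- Rpower_plus.
  replace (-q+q) with 0 by ring. rewrite Rpower_O by auto. ring.
Qed.

Lemma pm_conc m y q : (1 <= m)%nat -> (forall k, (k < m)%nat -> 0 < y k) -> sumR m y = 1 ->
  0 <= q <= 1 -> sumR m (fun k => Rpower (y k) q) <= Rpower (INR m) (1 - q).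
Proof.
  intros Hm Hy Hs Hq. assert (Hmr : 0 < INR m) by (apply lt_0_INR; lia).
  set (P := Rpower (INR m) (-q)). assert (0 < P) by apply Rpower_pos.
  apply Rle_trans with (sumR m (fun k => (P*(1-q)) * 1 + (P*q*INR m) * y k)).
  - apply sumR_le. intros k Hk. rewrite (pm_split (INR m)) by auto.
    pose proof (Hy k Hk). pose proof (bern_conc_R (INR m * y k) q ltac:(nra) Hq).
    fold P. apply Rle_trans with (P * (1 + q * (INR m * y k - 1))).
    apply Rmult_le_compat_l; lra. lra.
  - rewrite sumR_lin, sumR_const, Hs.
    replace (P * (1 - q) * (INR m * 1) + P * q * INR m * 1) with (P * Rpower (INR m) 1)
      by (rewrite Rpower_1 by auto; ring).
    unfold P. rewrite <- Rpower_plus. replace (-q+1) with (1-q) by ring. lra.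
Qed.

Lemma pm_conv m y q : (1 <= m)%nat -> (forall k, (k < m)%nat -> 0 < y k) -> sumR m y = 1 ->
  1 <= q -> Rpower (INR m) (1 - q) <= sumR m (fun k => Rpower (y k) q).
Proof.
  intros Hm Hy Hs Hq. assert (Hmr : 0 < INR m) by (apply lt_0_INR; lia).
  set (P := Rpower (INR m) (-q)). assert (0 < P) by apply Rpower_pos.
  apply Rle_trans with (sumR m (fun k => (P*(1-q)) * 1 + (P*q*INR m) * y k)).
  - rewrite sumR_lin, sumR_const, Hs.
    replace (P * (1 - q) * (INR m * 1) + P * q * INR m * 1) with (P * Rpower (INR m) 1)
      by (rewrite Rpower_1 by auto; ring).
    unfold P. rewrite <- Rpower_plus. replace (-q+1) with (1-q) by ring. lra.
  - apply sumR_le. intros k Hk. rewrite (pm_split (INR m)) by auto.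
    pose proof (Hy k Hk). pose proof (bern_pos_R (INR m * y k) q ltac:(nra) Hq).
    fold P. apply Rle_trans with (P * (1 + q * (INR m * y k - 1))).
    lra. apply Rmult_le_compat_l; lra.
Qed.

Lemma tang a u v : a < 1 -> 0 < u -> 0 < v ->
  Rpower v (2-a) * (Rpower v (a-1) - Rpower u (a-1)) <= (1-a)*(u - v).
Proof.
  intros Ha Hu Hv.
  assert (E1 : Rpower v (2-a) * Rpower v (a-1) = v).
  { rewrite <- Rpower_plus. replace (2-a+(a-1)) with 1 by ring. apply Rpower_1; auto. }
  assert (E2 : Rpower v (2-a) * Rpower u (a-1) = v * exp ((a-1)*(ln u - ln v))).
  { unfold Rpower. rewrite <- exp_plus. rewrite <- (exp_ln v) at 2 by auto. rewrite <- exp_plus.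
    f_equal. ring. }
  assert (E3 : exp (ln u - ln v) * v = u).
  { rewrite <- (exp_ln v) at 2 by auto. rewrite <- exp_plus. replace (ln u - ln v + ln v) with (ln u) by ring.
    apply exp_ln; auto. }
  pose proof (bern_neg_e (a-1) (ln u - ln v) ltac:(lra)).
  set (D := exp (ln u - ln v)) in *. set (F := exp ((a - 1) * (ln u - ln v))) in *.
  rewrite Rmult_minus_distr_l, E1, E2.
  assert (v * (1 + (a - 1) * (D - 1)) <= v * F) by (apply Rmult_le_compat_l; lra).
  nra.
Qed.

Lemma step (a : R) (m : nat) (w w' g : nat -> R) (e c K gam : R) :
  0 < a < 1/2 -> (1 <= m)%nat ->
  (forall k, (k < m)%nat -> 0 < w k) -> (forall k, (k < m)%nat -> 0 < w' k) ->
  sumR m w = 1 -> sumR m w' = 1 ->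
  (forall k, (k < m)%nat -> Rpower (w' k) (a-1) = Rpower (w k) (a-1) + e * g k - c) ->
  (forall k, (k < m)%nat -> -(gam / w k) <= g k /\ g k <= gam) ->
  0 < e -> 0 <= gam -> e * gam <= K ->
  (forall k, (k < m)%nat -> 2 * K * Rpower (w k) (-a) <= (1 - 2*a)/6) ->
  forall i, (i < m)%nat ->
   -32 * Rpower (w i) (1-a) * K <= w i - w' i /\
   w i - w' i <= 2 * Rpower (w i) (2-a) * (INR m + 1) * K /\
   Rpower (w' i) (a-1) <= Rpower (w i) (a-1) + K * (1 + 2 * INR m).
Proof.
  intros Ha Hm Hw Hw' Hs Hs' Hupd Hg He Hgam HK Hx i Hi.
  assert (HK0 : 0 <= K) by nra.
  assert (Hw1 : forall k, (k < m)%nat -> w k <= 1).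
  { intros k Hk. rewrite <- Hs. apply sumR_ge_term; auto. intros; apply Rlt_le, Hw; auto. }
  assert (Heg : forall k, (k < m)%nat -> - (K / w k) <= e * g k /\ e * g k <= e * gam).
  { intros k Hk. destruct (Hg k Hk) as [g1 g2]. pose proof (Hw k Hk). split.
    - assert (e * (-(gam / w k)) <= e * g k) by (apply Rmult_le_compat_l; lra).
      assert (e * gam / w k <= K / w k).
      { unfold Rdiv. apply Rmult_le_compat_r; [apply Rlt_le, Rinv_0_lt_compat; auto| auto]. }
      unfold Rdiv in *. lra.
    - apply Rmult_le_compat_l; lra. }
  assert (HKw : forall k, (k < m)%nat -> K <= K / w k).
  { intros k Hk. pose proof (Hw k Hk). pose proof (Hw1 k Hk).
    assert (1 <= / w k). { rewrite <- Rinv_1. apply Rinv_le_contravar; lra. }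
    unfold Rdiv. nra. }
  assert (Hc1 : c <= e * gam).
  { destruct (Rle_or_lt c (e*gam)) as [|Hlt]; auto. exfalso.
    assert (sumR m w < sumR m w'); [|lra].
    apply sumR_lt; auto. intros k Hk.
    apply (Rpow_neg_lt_inv _ _ (a-1)); try lra; auto.
    rewrite Hupd by auto. destruct (Heg k Hk). lra. }
  set (rho := 2 - 2*a).
  assert (Hratio : forall k, (k < m)%nat ->
     w' k <= w k + 12 * K * Rpower (w k) (1-a) /\ w' k <= rho * w k).
  { intros k Hk. pose proof (Hw k Hk) as Hwk. pose proof (Hw' k Hk) as Hw'k.
    set (x := 2*K*Rpower (w k)(-a)).
    assert (0 <= x) by (unfold x; pose proof (Rpower_pos (w k) (-a)); nra).
    assert (Hx6 : 6 * x <= 1 - 2*a) by (pose proof (Hx k Hk); unfold x; lra).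
    set (y := 1 + 6*x).
    assert (Hwr : w' k <= w k * y).
    { apply (Rpow_neg_le_inv _ _ (a-1)); [lra| auto | unfold y; nra|].
      rewrite <- Rpower_mult_distr by (unfold y; lra).
      assert (Rpower y (a-1) <= Rpower y (-(1/2))) by (apply Rle_Rpower; unfold y; lra).
      assert (Rpower y (-(1/2)) <= 1 - x).
      { set (z := Rpower y (-(1/2))). assert (0 < z) by apply Rpower_pos.
        assert (Hzz : z * z = / y).
        { unfold z. rewrite <- Rpower_plus. replace (-(1/2) + -(1/2)) with (-1) by lra.
          apply Rpower_neg1. unfold y; lra. }
        assert (Hy1 : 1 <= y*((1-x)*(1-x))) by (unfold y; nra).
        assert (/y <= (1-x)*(1-x)).
        { apply Rmult_le_reg_l with y; [unfold y; lra|]. rewrite Rinv_r by (unfold y; lra). lra. }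
        nra. }
      set (A := Rpower (w k) (a-1)). assert (0 < A) by apply Rpower_pos.
      assert (HAx : A * x = 2 * K / w k).
      { unfold A, x. replace (Rpower (w k) (a - 1) * (2 * K * Rpower (w k) (- a))) with
          (2 * K * (Rpower (w k) (a - 1) * Rpower (w k) (- a))) by ring.
        rewrite <- Rpower_plus. replace (a - 1 + - a) with (-1) by ring.
        rewrite Rpower_neg1 by auto. unfold Rdiv; ring. }
      assert (A * Rpower y (a-1) <= A * (1 - x)) by (apply Rmult_le_compat_l; lra).
      rewrite Hupd by auto. fold A. destruct (Heg k Hk). pose proof (HKw k Hk).
      unfold Rdiv in *. lra. }
    split.
    - assert (w k * x = 2 * K * Rpower (w k) (1-a)).
      { unfold x. rewrite <- (Rpower_1 (w k)) at 1 by auto.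
        replace (Rpower (w k) 1 * (2 * K * Rpower (w k) (- a))) with
          (2 * K * (Rpower (w k) 1 * Rpower (w k) (- a))) by ring.
        rewrite <- Rpower_plus. replace (1 + - a) with (1-a) by ring. ring. }
      unfold y in Hwr. nra.
    - unfold rho. unfold y in Hwr. nra. }
  set (P := fun k => Rpower (w' k) (1-a)).
  set (V := fun k => Rpower (w' k) (2-a)).
  assert (Hterm : forall k, (k < m)%nat -> (-(K*rho)) * P k + (-c) * V k <= (1-a) * w k + (-(1-a)) * w' k).
  { intros k Hk. pose proof (Hw k Hk) as Hwk. pose proof (Hw' k Hk) as Hw'k.
    pose proof (tang a (w k) (w' k) ltac:(lra) Hwk Hw'k) as Ht.
    rewrite Hupd in Ht by auto. fold (V k) in Ht.
    assert (HV : V k = P k * w' k).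
    { unfold V, P. rewrite <- (Rpower_1 (w' k)) at 3 by auto. rewrite <- Rpower_plus. f_equal; ring. }
    assert (0 < P k) by apply Rpower_pos.
    destruct (Heg k Hk) as [eg1 eg2]. destruct (Hratio k Hk) as [_ r2].
    assert (e * g k * V k >= -(K / w k) * V k) by (apply Rle_ge, Rmult_le_compat_r; [left; apply Rpower_pos| lra]).
    assert (K / w k * V k <= K * rho * P k).
    { rewrite HV. unfold Rdiv.
      replace (K * / w k * (P k * w' k)) with (K * P k * (w' k / w k)) by (unfold Rdiv; ring).
      replace (K * rho * P k) with (K * P k * rho) by ring.
      apply Rmult_le_compat_l; [nra|]. apply Rmult_le_reg_r with (w k); auto.
      unfold Rdiv. rewrite Rmult_assoc, Rinv_l by lra. lra. }
    nra. }
  assert (Hsum := sumR_le m _ _ Hterm). rewrite !sumR_lin, Hs, Hs' in Hsum.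
  assert (HP := pm_conc m w' (1-a) Hm Hw' Hs' ltac:(lra)).
  assert (HV := pm_conv m w' (2-a) Hm Hw' Hs' ltac:(lra)).
  replace (1 - (1-a)) with a in HP by ring. replace (1 - (2-a)) with (a-1) in HV by ring.
  fold P in HP. fold V in HV.
  assert (Hmr : 0 < INR m) by (apply lt_0_INR; lia).
  assert (Hma : Rpower (INR m) a = INR m * Rpower (INR m) (a-1)).
  { rewrite <- (Rpower_1 (INR m)) at 2 by auto. rewrite <- Rpower_plus. f_equal; ring. }
  assert (Hrho : 0 <= rho <= 2) by (unfold rho; lra).
  assert (Hc2 : - (K * rho * INR m) <= c).
  { destruct (Rle_or_lt 0 c) as [|Hc]; [assert (0 <= K*rho) by nra; nra|].
    set (Q := Rpower (INR m) (a-1)) in *. assert (0 < Q) by apply Rpower_pos.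
    assert (-c * Q <= -c * sumR m V) by (apply Rmult_le_compat_l; lra).
    assert (K*rho * sumR m P <= K*rho * (INR m * Q)) by (rewrite <- Hma; apply Rmult_le_compat_l; nra).
    assert (Hcq : -c * Q <= K * rho * INR m * Q) by lra.
    apply Rmult_le_reg_r in Hcq; auto. lra. }
  destruct (Heg i Hi) as [eg1 eg2].
  assert (Hdiff : Rpower (w' i) (a-1) - Rpower (w i) (a-1) <= K * (1 + rho * INR m)).
  { rewrite Hupd by auto. nra. }
  split; [|split].
  - destruct (Hratio i Hi) as [r1 _]. pose proof (Rpower_pos (w i) (1-a)). nra.
  - pose proof (tang a (w' i) (w i) ltac:(lra) (Hw' i Hi) (Hw i Hi)) as Ht.
    set (W := Rpower (w i) (2-a)) in *. assert (0 < W) by apply Rpower_pos.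
    assert (W * (Rpower (w' i) (a-1) - Rpower (w i) (a-1)) <= W * (K * (1 + rho * INR m)))
      by (apply Rmult_le_compat_l; lra).
    assert (K * (1 + rho * INR m) <= (1-a) * (2 * (INR m + 1) * K)) by (unfold rho; nra).
    assert (W * (K * (1 + rho * INR m)) <= W * ((1-a) * (2 * (INR m + 1) * K))) by (apply Rmult_le_compat_l; lra).
    assert (W * (Rpower (w i) (a - 1) - Rpower (w' i) (a - 1)) = - (W * (Rpower (w' i) (a - 1) - Rpower (w i) (a - 1)))) by ring.
    apply Rmult_le_reg_l with (1-a); [lra|]. lra.
  - assert (K * rho * INR m <= K * 2 * INR m).
    { apply Rmult_le_compat_r; [lra|]. apply Rmult_le_compat_l; lra. }
    lra.
Qed.

Lemma nat_above (X : R) : exists N : nat, X <= INR N.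
Proof.
  destruct (archimed (Rmax X 0)) as [H1 _].
  exists (Z.to_nat (up (Rmax X 0))).
  assert (0 < up (Rmax X 0))%Z.
  { apply lt_IZR. pose proof (Rmax_r X 0). lra. }
  rewrite INR_IZR_INZ, Z2Nat.id by lia. pose proof (Rmax_l X 0). lra.
Qed.

Lemma ln_ge1 x : 3 <= x -> 1 <= ln x.
Proof.
  intros Hx. pose proof exp_le_3. rewrite <- (ln_exp 1) at 1.
  destruct (Req_dec (exp 1) x) as [<-|Hne]; [lra|].
  apply Rlt_le, ln_increasing; [apply exp_pos| lra].
Qed.

Lemma large_T (a : R) (m n : nat) : 0 < a < 1/2 -> (1 <= m)%nat -> (1 <= n)%nat ->
  exists T0 : nat, forall T : nat, (T0 <= T)%nat ->
    3 <= INR T /\ 1 <= gamma_par n T /\ 0 < eta_par a m n T /\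
    0 < 1 / (10 * sqrt (INR m)) * Rpower (INR T) (1 / (2 * (a - 1))) /\
    (2 * (eta_par a m n T * gamma_par n T) *
       Rpower (1 / (10 * sqrt (INR m)) * Rpower (INR T) (1 / (2 * (a - 1)))) (-a) <= (1 - 2*a)/6) /\
    (Rpower (INR m) (1-a) + INR T * (eta_par a m n T * gamma_par n T) * (1 + 2 * INR m)
       <= Rpower (1 / (10 * sqrt (INR m)) * Rpower (INR T) (1 / (2 * (a - 1)))) (a-1)).
Proof.
  intros Ha Hm Hn.
  assert (Hmr : 1 <= INR m) by (apply (le_INR 1); lia).
  assert (Hnr : 1 <= INR n) by (apply (le_INR 1); lia).
  set (M := Rpower (INR m) ((1+a)/2)). assert (HM : 0 < M) by apply Rpower_pos.
  set (X := 10 * sqrt (INR m)).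
  assert (Hsm : 1 <= sqrt (INR m)) by (rewrite <- sqrt_1; apply sqrt_le_1_alt; lra).
  assert (HX : 0 < X) by (unfold X; lra).
  set (beta := (1 - 2*a) / (2 * (1 - a))).
  assert (Hbeta : 0 < beta) by (unfold beta; apply Rdiv_lt_0_compat; lra).
  set (eps := (1 - 2*a)/6). assert (Heps : 0 < eps) by (unfold eps; lra).
  set (CA := 2 * Rpower X a / (M * eps)).
  assert (HCA : 0 < CA) by (unfold CA; pose proof (Rpower_pos X a); apply Rdiv_lt_0_compat; nra).
  assert (HXM : Rpower X (1-a) * M = Rpower 10 (1-a) * INR m).
  { unfold X. rewrite <- Rpower_mult_distr by lra. rewrite <- Rpower_sqrt by lra.
    rewrite Rpower_mult. unfold M. rewrite Rmult_assoc, <- Rpower_plus.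
    rewrite <- (Rpower_1 (INR m)) at 2 by lra. f_equal. f_equal. field. }
  assert (H10 : 3 < Rpower 10 (1-a)).
  { apply Rlt_le_trans with (Rpower 10 (/2)).
    - rewrite Rpower_sqrt by lra. pose proof (sqrt_pos 10). pose proof (sqrt_sqrt 10 ltac:(lra)). nra.
    - apply Rle_Rpower; lra. }
  set (D := Rpower X (1-a) - (1 + 2 * INR m) / M).
  assert (HD : 0 < D).
  { unfold D. apply Rmult_lt_reg_r with M; auto. rewrite Rmult_minus_distr_r, HXM.
    unfold Rdiv. rewrite Rmult_assoc, Rinv_l by lra. nra. }
  set (B := Rpower (INR m) (1-a) / D).
  assert (HB : 0 < B) by (unfold B; apply Rdiv_lt_0_compat; [apply Rpower_pos| auto]).
  destruct (nat_above (Rmax 3 (Rmax (B*B) (Rpower CA (/beta))))) as [T0 HT0].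
  exists T0. intros T HT.
  assert (HTr : Rmax 3 (Rmax (B*B) (Rpower CA (/beta))) <= INR T)
    by (apply Rle_trans with (INR T0); auto; apply le_INR; auto).
  pose proof (Rmax_l 3 (Rmax (B*B) (Rpower CA (/beta)))).
  pose proof (Rmax_r 3 (Rmax (B*B) (Rpower CA (/beta)))).
  pose proof (Rmax_l (B*B) (Rpower CA (/beta))).
  pose proof (Rmax_r (B*B) (Rpower CA (/beta))).
  set (tau := INR T) in *.
  assert (Htau : 3 <= tau) by lra.
  assert (Hln : 1 <= ln tau) by (apply ln_ge1; auto).
  assert (Hsq : 0 < sqrt tau) by (apply sqrt_lt_R0; lra).
  assert (Hgam : 1 <= gamma_par n T) by (unfold gamma_par; fold tau; nra).
  assert (HK : eta_par a m n T * gamma_par n T = / (sqrt tau * M)).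
  { unfold eta_par, gamma_par. fold tau. fold M. field. repeat split; lra. }
  assert (Heta : 0 < eta_par a m n T).
  { unfold eta_par. fold tau. fold M. apply Rmult_lt_0_compat; apply Rdiv_lt_0_compat; try lra; nra. }
  assert (HL : 1 / X * Rpower tau (1 / (2 * (a - 1))) = / X * Rpower tau (1 / (2 * (a - 1)))) by (unfold Rdiv; ring).
  fold X. rewrite HK, HL.
  assert (HLpow : forall q, Rpower (/ X * Rpower tau (1 / (2 * (a - 1)))) q =
                  Rpower X (-q) * Rpower tau (q / (2 * (a-1)))).
  { intros q. rewrite <- Rpower_mult_distr by (try apply Rinv_0_lt_compat; auto; apply Rpower_pos).
    rewrite Rpower_inv_base by auto. rewrite Rpower_mult. f_equal. f_equal. field. lra. }
  split; [auto|]. split; [auto|]. split; [auto|]. split.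
  { apply Rmult_lt_0_compat; [apply Rinv_0_lt_compat; auto| apply Rpower_pos]. }
  rewrite !HLpow. split.
  -
    replace (- - a) with a by ring.
    assert (Hsqp : sqrt tau = Rpower tau (/2)) by (rewrite Rpower_sqrt; lra).
    assert (Hpb : Rpower tau (- a / (2 * (a - 1))) / sqrt tau = / Rpower tau beta).
    { rewrite Hsqp. rewrite <- Rpower_Ropp. unfold Rdiv. rewrite <- Rpower_Ropp, <- Rpower_plus.
      f_equal. unfold beta. field. lra. }
    assert (HCb : CA <= Rpower tau beta).
    { replace CA with (Rpower (Rpower CA (/beta)) beta).
      apply Rle_Rpower_l; [lra| split; [apply Rpower_pos| lra]].
      rewrite Rpower_mult. replace (/beta * beta) with 1 by (field; lra). apply Rpower_1; auto. }
    replace (2 * / (sqrt tau * M) * (Rpower X a * Rpower tau (- a / (2 * (a - 1)))))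
      with (2 * Rpower X a / M * (Rpower tau (- a / (2 * (a - 1))) / sqrt tau)) by (field; lra).
    rewrite Hpb. fold eps.
    assert (0 < Rpower tau beta) by apply Rpower_pos.
    assert (/ Rpower tau beta <= / CA) by (apply Rinv_le_contravar; auto).
    assert (Hfin : 2 * Rpower X a / M * / Rpower tau beta <= 2 * Rpower X a / M * / CA).
    { apply Rmult_le_compat_l; auto. pose proof (Rpower_pos X a). unfold Rdiv.
      apply Rmult_le_pos; [lra| left; apply Rinv_0_lt_compat; auto]. }
    replace (2 * Rpower X a / M * / CA) with eps in Hfin by (unfold CA; field; repeat split; try lra; pose proof (Rpower_pos X a); lra).
    lra.
  -
    replace (- (a - 1)) with (1 - a) by ring.
    replace ((a - 1) / (2 * (a - 1))) with (/2) by (field; lra).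
    rewrite Rpower_sqrt by lra.
    assert (Htt : tau = sqrt tau * sqrt tau) by (rewrite sqrt_sqrt; lra).
    assert (HBs : B <= sqrt tau).
    { rewrite <- (sqrt_square B) by lra. apply sqrt_le_1_alt. lra. }
    assert (HmD : Rpower (INR m) (1 - a) <= D * sqrt tau).
    { unfold B in HBs. apply Rmult_le_reg_r with (/D). apply Rinv_0_lt_compat; auto.
      replace (D * sqrt tau * / D) with (sqrt tau) by (field; lra). unfold Rdiv in HBs. lra. }
    unfold D in HmD.
    replace (tau * / (sqrt tau * M) * (1 + 2 * INR m)) with (sqrt tau * ((1 + 2 * INR m) / M)).
    + nra.
    + rewrite Htt at 2. field. lra.
Qed.

Theorem corollary1 (alpha : R) (m n : nat) :
  0 < alpha < 1 / 2 -> (1 <= m)%nat -> (1 <= n)%nat ->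
  exists T0 : nat, forall (T : nat), (T0 <= T)%nat ->
  forall (p : nat -> nat -> nat -> R) (j : nat -> nat)
         (w : nat -> nat -> R) (e : nat -> R),
    is_run alpha m n T p j w e ->
    small_gradient m n T p j w ->
    forall i t, (i < m)%nat -> (1 <= t <= T)%nat ->
      (Rpower (w t i) alpha >= 4 * eta_par alpha m n T * gamma_par n T /\
       w t i >= 1 / (10 * sqrt (INR m)) * Rpower (INR T) (1 / (2 * (alpha - 1)))) /\
      (- 32 * Rpower (w t i) (1 - alpha) * eta_par alpha m n T * gamma_par n T
         <= w t i - w (S t) i /\
       w t i - w (S t) i
         <= 2 * Rpower (w t i) (2 - alpha) * (INR m + 1) * eta_par alpha m n T * gamma_par n T).
Proof.
  intros Ha Hm Hn.
  destruct (large_T alpha m n Ha Hm Hn) as [T0 HT0]. exists T0.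
  intros T HT p j w e Hrun Hsg.
  destruct (HT0 T HT) as (Htau & Hgam & Heta & HL & HC1 & HC2).
  set (eta := eta_par alpha m n T) in *.
  set (gam := gamma_par n T) in *.
  set (L := 1 / (10 * sqrt (INR m)) * Rpower (INR T) (1 / (2 * (alpha - 1)))) in *.
  set (K := eta * gam) in *.
  assert (HK : 0 < K) by (unfold K; nra).
  assert (HetaK : eta <= K) by (unfold K; nra).
  assert (Hmr : 1 <= INR m) by (apply (le_INR 1); lia).
  destruct Hrun as (Hrep & Hw1 & He & Hupd).
  set (a := alpha) in *.
  assert (HfromL : forall y, L <= y ->
            2 * K * Rpower y (-a) <= (1 - 2*a)/6 /\ 4 * K <= Rpower y a).
  { intros y Hy. assert (Hy0 : 0 < y) by lra.
    assert (Rpower y (-a) <= Rpower L (-a)) by (apply Rpow_neg_le; lra).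
    assert (H1 : 2 * K * Rpower y (-a) <= (1 - 2*a)/6).
    { apply Rle_trans with (2 * K * Rpower L (-a)); auto. apply Rmult_le_compat_l; lra. }
    split; auto.
    assert (Hyy : Rpower y a * Rpower y (-a) = 1).
    { rewrite <- Rpower_plus. replace (a + -a) with 0 by ring. apply Rpower_O; auto. }
    pose proof (Rpower_pos y a). pose proof (Rpower_pos y (-a)). nra. }
  set (Bnd := fun k : nat => Rpower (INR m) (1-a) + INR k * K * (1 + 2 * INR m)).
  assert (HBndL : forall k y, (k <= T)%nat -> 0 < y -> Rpower y (a-1) <= Bnd k -> L <= y).
  { intros k y Hk Hy Hb. apply (Rpow_neg_le_inv _ _ (a-1)); [lra| auto| auto|].
    apply Rle_trans with (Bnd k); auto. apply Rle_trans with (2 := HC2). unfold Bnd.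
    assert (INR k <= INR T) by (apply le_INR; auto).
    assert (0 <= K * (1 + 2 * INR m)) by nra. nra. }
  assert (Hcand : forall t, (forall i, (i < m)%nat -> L <= w t i) -> eta_cand a m n T (w t) = eta).
  { intros t Ht. unfold eta_cand. fold eta. destruct (Rle_dec eta (minR m (fun i => Rpower (w t i) a))) as [|Hn0]; auto.
    exfalso. apply Hn0. apply minR_ge; auto. intros k Hk. destruct (HfromL _ (Ht k Hk)). lra. }
  assert (Hinv : forall k, (k < T)%nat ->
     (forall i, (i < m)%nat -> 0 < w (S k) i) /\ sumR m (w (S k)) = 1 /\
     (forall i, (i < m)%nat -> Rpower (w (S k) i) (a-1) <= Bnd k) /\ e (S k) = eta).
  { induction k as [|k IH]; intros Hk.
    - assert (Hm0 : 0 < INR m) by lra.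
      assert (Hpos : forall i, (i < m)%nat -> 0 < w 1%nat i).
      { intros i Hi. rewrite Hw1 by auto. apply Rdiv_lt_0_compat; lra. }
      assert (Hb : forall i, (i < m)%nat -> Rpower (w 1%nat i) (a-1) <= Bnd 0%nat).
      { intros i Hi. rewrite Hw1 by auto. unfold Bnd. simpl INR.
        replace (1 / INR m) with (/ INR m) by (unfold Rdiv; ring).
        rewrite Rpower_inv_base by auto. replace (- (a-1)) with (1-a) by ring. lra. }
      split; [auto|]. split; [|split; [auto|]].
      + rewrite (sumR_ext _ _ (fun _ => 1 / INR m)) by auto. rewrite sumR_const. field. lra.
      + rewrite He by lia. simpl. apply Hcand. intros i Hi. apply (HBndL 0%nat); auto; lia.
    - destruct (IH ltac:(lia)) as (Hpos & Hsum & Hb & Het).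
      set (t := S k) in *.
      destruct (Hupd t ltac:(unfold t; lia)) as (Hpos' & Hsum' & c & Hc).
      assert (HLt : forall i, (i < m)%nat -> L <= w t i) by (intros; apply (HBndL k); auto; lia).
      assert (Hst := step a m (w t) (w (S t)) (fun k => dL m n (p t) (j t) (w t) k) eta c K gam
        ltac:(lra) Hm Hpos Hpos' Hsum Hsum').
      assert (Hb' : forall i, (i < m)%nat -> Rpower (w (S t) i) (a-1) <= Bnd (S k)).
      { intros i Hi.
        destruct (Hst ltac:(intros k0 Hk0; rewrite <- Het; specialize (Hc k0 Hk0); lra)
                      ltac:(intros k0 Hk0; destruct (Hsg t k0 ltac:(unfold t; lia) Hk0) as (_ & g1 & g2); auto)
                      ltac:(lra) ltac:(lra) ltac:(unfold K; lra)
                      ltac:(intros k0 Hk0; apply (HfromL _ (HLt k0 Hk0))) i Hi) as (_ & _ & H3).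
        apply Rle_trans with (1 := H3). pose proof (Hb i Hi). unfold Bnd in *. rewrite S_INR. lra. }
      split; [auto|]. split; [auto|]. split; [auto|].
      rewrite He by lia. simpl Nat.eqb. cbv iota.
      replace (S t - 1)%nat with t by (unfold t; lia). rewrite Het.
      rewrite Hcand. unfold Rmin. destruct (Rle_dec eta eta); auto.
      intros i Hi. apply (HBndL (S k)); auto; lia. }
  intros i t Hi Ht.
  destruct t as [|k]; [lia|].
  destruct (Hinv k ltac:(lia)) as (Hpos & Hsum & Hb & Het).
  set (t := S k) in *.
  destruct (Hupd t ltac:(unfold t; lia)) as (Hpos' & Hsum' & c & Hc).
  assert (HLt : forall i, (i < m)%nat -> L <= w t i) by (intros; apply (HBndL k); auto; lia).
  destruct (step a m (w t) (w (S t)) (fun k => dL m n (p t) (j t) (w t) k) eta c K gam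
        ltac:(lra) Hm Hpos Hpos' Hsum Hsum'
        ltac:(intros k0 Hk0; rewrite <- Het; specialize (Hc k0 Hk0); lra)
        ltac:(intros k0 Hk0; destruct (Hsg t k0 ltac:(unfold t; lia) Hk0) as (_ & g1 & g2); auto)
        ltac:(lra) ltac:(lra) ltac:(unfold K; lra)
        ltac:(intros k0 Hk0; apply (HfromL _ (HLt k0 Hk0))) i Hi) as (H1 & H2 & _).
  destruct (HfromL _ (HLt i Hi)) as [_ H4].
  unfold K in *.
  split; [split|split].
  - lra.
  - apply Rle_ge, HLt; auto.
  - replace (-32 * Rpower (w t i) (1 - a) * eta * gam) with (-32 * Rpower (w t i) (1 - a) * (eta * gam)) by ring. auto.
  - replace (2 * Rpower (w t i) (2 - a) * (INR m + 1) * eta * gam) with (2 * Rpower (w t i) (2 - a) * (INR m + 1) * (eta * gam)) by ring. auto.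
Qed.
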